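(* Let $f(x):=x^n+a_1x^{n-1}+a_2x^{n-2}+\cdots+a_n$ be a real polynomial with roots $r,x_2,x_3,\ldots,x_n$, where $r$ is real and $\mathrm{Re}(x_j)\le 0$ for $j=2,3,\ldots,n$. Then: (i) Let $t$ be the largest integer such that $a_{2t}\ne0$. Then either $a_{2j}>0$ for all $j=1,2,\ldots,t$, or there exists $s\in\{1,2,\ldots,t\}$ such that $a_{2j}>0$ for $j=1,\ldots,s-1$, $a_{2s}\le 0$, and $a_{2j}<0$ for $j=s+1,\ldots,t$. (ii) Let $t'$ be the largest integer such that $a_{2t'-1}\ne0$. Then either $a_{2j-1}>0$ for all $j=1,2,\ldots,t'$, or there exists $s'\in\{1,2,\ldots,t'\}$ such that $a_{2j-1}>0$ for $j=1,\ldots,s'-1$, $a_{2s'-1}\le 0$, and $a_{2j-1}<0$ for $j=s'+1,\ldots,t'$. *)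

(* Defs.v *)
From HB Require Import structures.
From mathcomp Require Import all_boot all_order all_algebra.
From mathcomp Require Import complex.
From mathcomp Require Import reals.
Set Implicit Arguments. Unset Strict Implicit. Unset Printing Implicit Defensive.
Import Order.TTheory GRing.Theory Num.Theory.
Local Open Scope ring_scope.

(* Coefficient a_k of f(x) = x^n + a_1 x^(n-1) + ... + a_n, i.e. the
   coefficient of x^(n-k); by convention a_k = 0 for k > n. *)
Definition coef_a (R : nzRingType) (n : nat) (f : {poly R}) (k : nat) : R :=
  if (k <= n)%N then f`_(n - k) else 0.

(* Main.v *)
Require Import Defs.
From HB Require Import structures.
From mathcomp Require Import all_boot all_order all_algebra.
From mathcomp Require Import complex.
From mathcomp Require Import reals.
From mathcomp Require Import zify ring lra.
Import Order.TTheory GRing.Theory Num.Theory.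
Set Implicit Arguments. Unset Strict Implicit. Unset Printing Implicit Defensive.
Local Open Scope ring_scope.

Definition Gs (R : comPzRingType) (c : int -> R) (P Q d : int) :=
  c (P + d) * c Q - c P * c (Q + d).

Definition Gnn (R : realFieldType) (c : int -> R) := forall P Q d : int,
  0 <= d -> (exists e : int, 0 <= e /\ Q = P + 2 * e) -> 0 <= Gs c P Q d.

Lemma expand_id (R : comPzRingType) (c c' : int -> R) (w0 w1 w2 : R) (P Q d : int) :
 (forall i, c' i = w0 * c i + w1 * c (i - 1) + w2 * c (i - 2)) ->
 c' (P + d) * c' Q - c' P * c' (Q + d) =
 w0^+2 * (c (P+d) * c Q - c P * c (Q+d))
 + w1^+2 * (c (P+d-1) * c (Q-1) - c (P-1) * c (Q+d-1))
 + w2^+2 * (c (P+d-2) * c (Q-2) - c (P-2) * c (Q+d-2))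
 + w0*w1*((c (P+d) * c (Q-1) - c (P-1) * c (Q+d)) + (c (P+d-1) * c Q - c P * c (Q+d-1)))
 + w1*w2*((c (P+d-1) * c (Q-2) - c (P-2) * c (Q+d-1)) + (c (P+d-2) * c (Q-1) - c (P-1) * c (Q+d-2)))
 + w0*w2*((c (P+d) * c (Q-2) - c P * c (Q+d-2)) + (c (P+d-2) * c Q - c (P-2) * c (Q+d))).
Proof. move=> H; rewrite !H; ring. Qed.

Lemma Gnn_at (R : realFieldType) (c : int -> R) P Q d A B :
  Gnn c -> 0 <= d -> (exists e : int, 0 <= e /\ Q = P + 2 * e) ->
  A = P + d -> B = Q + d -> 0 <= c A * c Q - c P * c B.
Proof. by move=> H hd he -> ->; apply: H. Qed.

Lemma Ts_nonneg (R : realFieldType) (c : int -> R) (P Q d : int) :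
  Gnn c -> 1 <= d -> (exists e : int, 1 <= e /\ Q = P + 2 * e) ->
  (0 <= c (P+d) * c Q - c P * c (Q+d) /\
      0 <= c (P+d-1) * c (Q-1) - c (P-1) * c (Q+d-1) /\
      0 <= c (P+d-2) * c (Q-2) - c (P-2) * c (Q+d-2) /\
      0 <= c (P+d) * c (Q-1) - c (P-1) * c (Q+d) /\
      0 <= c (P+d-1) * c Q - c P * c (Q+d-1) /\
      0 <= c (P+d-1) * c (Q-2) - c (P-2) * c (Q+d-1) /\
      0 <= c (P+d-2) * c (Q-1) - c (P-1) * c (Q+d-2) /\
      0 <= c (P+d) * c (Q-2) - c P * c (Q+d-2) /\
      0 <= c (P+d-2) * c Q - c (P-2) * c (Q+d)).
Proof.
move=> H hd [e [he ->]].
split; [|split; [|split; [|split; [|split; [|split; [|split; [|split]]]]]]].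
- by apply: (Gnn_at (d := d)); [done | lia | exists e; split; lia | lia | lia].
- by apply: (Gnn_at (d := d)); [done | lia | exists e; split; lia | lia | lia].
- by apply: (Gnn_at (d := d)); [done | lia | exists e; split; lia | lia | lia].
- by apply: (Gnn_at (d := d + 1)); [done | lia | exists e; split; lia | lia | lia].
- by apply: (Gnn_at (d := d - 1)); [done | lia | exists e; split; lia | lia | lia].
- by apply: (Gnn_at (d := d + 1)); [done | lia | exists e; split; lia | lia | lia].
- by apply: (Gnn_at (d := d - 1)); [done | lia | exists e; split; lia | lia | lia].
- by apply: (Gnn_at (d := d)); [done | lia | exists (e - 1); split; lia | lia | lia].
- by apply: (Gnn_at (d := d)); [done | lia | exists (e + 1); split; lia | lia | lia].
Qed.

Definition E9 (R : comPzRingType) (w0 w1 w2 T1 T2 T3 T4 T5 T6 T7 T8 T9 : R) :=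
  w0^+2 * T1 + w1^+2 * T2 + w2^+2 * T3 + w0*w1*(T4+T5) + w1*w2*(T6+T7) + w0*w2*(T8+T9).

Lemma E9_ge0 (R : realFieldType) (w0 w1 w2 T1 T2 T3 T4 T5 T6 T7 T8 T9 : R) :
  0 <= w0 -> 0 <= w1 -> 0 <= w2 -> 0 <= T1 -> 0 <= T2 -> 0 <= T3 -> 0 <= T4 ->
  0 <= T5 -> 0 <= T6 -> 0 <= T7 -> 0 <= T8 -> 0 <= T9 ->
  0 <= E9 w0 w1 w2 T1 T2 T3 T4 T5 T6 T7 T8 T9.
Proof.
move=> h0 h1 h2 t1 t2 t3 t4 t5 t6 t7 t8 t9; rewrite /E9.
have a1 : 0 <= w0^+2 * T1 by rewrite mulr_ge0 ?exprn_ge0.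
have a2 : 0 <= w1^+2 * T2 by rewrite mulr_ge0 ?exprn_ge0.
have a3 : 0 <= w2^+2 * T3 by rewrite mulr_ge0 ?exprn_ge0.
have a4 : 0 <= w0 * w1 * (T4 + T5) by rewrite !mulr_ge0 ?addr_ge0.
have a6 : 0 <= w1 * w2 * (T6 + T7) by rewrite !mulr_ge0 ?addr_ge0.
have a8 : 0 <= w0 * w2 * (T8 + T9) by rewrite !mulr_ge0 ?addr_ge0.
move: a1 a2 a3 a4 a6 a8.
set x1 := w0^+2 * T1; set x2 := w1^+2 * T2; set x3 := w2^+2 * T3.
set x4 := w0 * w1 * (T4 + T5); set x6 := w1 * w2 * (T6 + T7).
set x8 := w0 * w2 * (T8 + T9).
move=> *; lra.
Qed.

Lemma E9_gt0 (R : realFieldType) (w0 w1 w2 T1 T2 T3 T4 T5 T6 T7 T8 T9 : R) :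
  0 <= w0 -> 0 <= w1 -> 0 <= w2 -> 0 <= T1 -> 0 <= T2 -> 0 <= T3 -> 0 <= T4 ->
  0 <= T5 -> 0 <= T6 -> 0 <= T7 -> 0 <= T8 -> 0 <= T9 ->
  (0 < w1^+2 * T2 \/ 0 < w2^+2 * T3 \/ 0 < w1 * w2 * T6) ->
  0 < E9 w0 w1 w2 T1 T2 T3 T4 T5 T6 T7 T8 T9.
Proof.
move=> h0 h1 h2 t1 t2 t3 t4 t5 t6 t7 t8 t9 H; rewrite /E9.
have a1 : 0 <= w0^+2 * T1 by rewrite mulr_ge0 ?exprn_ge0.
have a2 : 0 <= w1^+2 * T2 by rewrite mulr_ge0 ?exprn_ge0.
have a3 : 0 <= w2^+2 * T3 by rewrite mulr_ge0 ?exprn_ge0.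
have a4 : 0 <= w0 * w1 * (T4 + T5) by rewrite !mulr_ge0 ?addr_ge0.
have a6 : 0 <= w1 * w2 * T6 by rewrite !mulr_ge0.
have a7 : 0 <= w1 * w2 * T7 by rewrite !mulr_ge0.
have a8 : 0 <= w0 * w2 * (T8 + T9) by rewrite !mulr_ge0 ?addr_ge0.
rewrite [w1 * w2 * (T6 + T7)]mulrDr.
move: H a1 a2 a3 a4 a6 a7 a8.
set x1 := w0^+2 * T1; set x2 := w1^+2 * T2; set x3 := w2^+2 * T3.
set x4 := w0 * w1 * (T4 + T5); set x6 := w1 * w2 * T6; set x7 := w1 * w2 * T7.
set x8 := w0 * w2 * (T8 + T9).
move=> H *; case: H => [|[]] H; lra.
Qed.

Lemma expand_E9 (R : comPzRingType) (c c' : int -> R) (w0 w1 w2 : R) (P Q d : int) :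
 (forall i, c' i = w0 * c i + w1 * c (i - 1) + w2 * c (i - 2)) ->
 c' (P + d) * c' Q - c' P * c' (Q + d) =
 E9 w0 w1 w2 (c (P+d) * c Q - c P * c (Q+d))
  (c (P+d-1) * c (Q-1) - c (P-1) * c (Q+d-1))
  (c (P+d-2) * c (Q-2) - c (P-2) * c (Q+d-2))
  (c (P+d) * c (Q-1) - c (P-1) * c (Q+d)) (c (P+d-1) * c Q - c P * c (Q+d-1))
  (c (P+d-1) * c (Q-2) - c (P-2) * c (Q+d-1)) (c (P+d-2) * c (Q-1) - c (P-1) * c (Q+d-2))
  (c (P+d) * c (Q-2) - c P * c (Q+d-2)) (c (P+d-2) * c Q - c (P-2) * c (Q+d)).
Proof. move=> H; rewrite !H /E9; ring. Qed.

Lemma Gnn_mul (R : realFieldType) (c c' : int -> R) (w0 w1 w2 : R) :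
  0 <= w0 -> 0 <= w1 -> 0 <= w2 -> Gnn c ->
  (forall i, c' i = w0 * c i + w1 * c (i - 1) + w2 * c (i - 2)) -> Gnn c'.
Proof.
move=> h0 h1 h2 HG H P Q d hd [e [he ->]]; rewrite /Gs.
have [d0|dpos] := boolP (d == 0).
  by rewrite (eqP d0) !addr0 subrr.
have [e0|epos] := boolP (e == 0).
  by rewrite (eqP e0) mulr0 addr0 mulrC subrr.
have hd1 : 1 <= d by lia.
have he1 : exists e0 : int, 1 <= e0 /\ P + 2 * e = P + 2 * e0 by exists e; split => //; lia.
have [T1 [T2 [T3 [T4 [T5 [T6 [T7 [T8 T9]]]]]]]] := Ts_nonneg HG hd1 he1.
rewrite (expand_E9 _ _ _ H); exact: E9_ge0.
Qed.

Record Inv (R : realFieldType) (c : int -> R) (N : int) : Prop := {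
  inv_N : 0 <= N;
  inv_neg : forall i, i < 0 -> c i = 0;
  inv_ge0 : forall i, 0 <= c i;
  inv_pos : forall i, 0 <= i -> i <= N -> 0 < c i;
  inv_G : Gnn c;
  inv_S : forall P, -1 <= P -> P + 2 <= N -> 0 < c (P + 1) * c (P + 2) - c P * c (P + 3) }.

Lemma S_at (R : realFieldType) (c : int -> R) N P A B C :
  Inv c N -> -1 <= P -> P + 2 <= N -> A = P + 1 -> B = P + 2 -> C = P + 3 ->
  0 < c A * c B - c P * c C.
Proof. by move=> H h1 h2 -> -> ->; apply: (inv_S H). Qed.

Lemma Inv_mul (R : realFieldType) (c c' : int -> R) (N : int) (w0 w1 w2 : R) (k : int) :
  Inv c N -> 0 < w0 -> 0 <= w1 -> 0 <= w2 ->
  (forall i, c' i = w0 * c i + w1 * c (i - 1) + w2 * c (i - 2)) ->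
  (k = 1 /\ w1 = 1 /\ w2 = 0) \/ (k = 2 /\ 0 < w1 /\ w2 = 1) ->
  Inv c' (N + k).
Proof.
move=> I h0 h1 h2 H hk.
have hN := inv_N I; have neg := inv_neg I; have ge0 := inv_ge0 I; have pos := inv_pos I.
have k1 : 1 <= k by case: hk => [[-> _]|[-> _]].
have k2 : k <= 2 by case: hk => [[-> _]|[-> _]].
have neg' : forall i, i < 0 -> c' i = 0.
  by move=> i hi; rewrite H !neg ?mulr0 ?addr0 //; lia.
have ge0' : forall i, 0 <= c' i.
  move=> i; rewrite H.
  by rewrite !addr_ge0 // ?mulr_ge0 // ltW.
have pos' : forall i, 0 <= i -> i <= N + k -> 0 < c' i.
  move=> i hi1 hi2; rewrite H.
  have t0 : 0 <= w0 * c i by rewrite mulr_ge0 // ltW.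
  have t1 : 0 <= w1 * c (i - 1) by rewrite mulr_ge0.
  have t2 : 0 <= w2 * c (i - 2) by rewrite mulr_ge0.
  have [hiN|hiN] := lerP i N.
    have : 0 < w0 * c i by rewrite mulr_gt0 // pos.
    move: t0 t1 t2; set a := w0 * c i; set b := w1 * c (i - 1); set e := w2 * c (i - 2).
    move=> *; lra.
  case: hk => [[hk [-> ->]]|[hk [hw1 ->]]].
    have : 0 < c (i - 1) by apply: pos; lia.
    move: t0 t1 t2; set a := w0 * c i; set b := w1 * c (i - 1); set e := w2 * c (i - 2).
    rewrite /b mul1r => *; lra.
  have [hiN1|hiN1] := lerP i (N + 1).
    have : 0 < w1 * c (i - 1) by rewrite mulr_gt0 // pos //; lia.
    move: t0 t1 t2; set a := w0 * c i; set b := w1 * c (i - 1); set e := w2 * c (i - 2).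
    move=> *; have := ge0 (i - 2); lra.
  have : 0 < c (i - 2) by apply: pos; lia.
  move: t0 t1 t2; set a := w0 * c i; set b := w1 * c (i - 1); set e := w2 * c (i - 2).
  rewrite /e mul1r => *; lra.
constructor => //.
- lia.
- exact: (Gnn_mul (ltW h0) h1 h2 (inv_G I) H).
move=> P hP1 hP2.
have [Pm1|Pm1] := eqVneq P (-1).
  rewrite Pm1 (neg' (-1)) // mul0r subr0.
  by rewrite mulr_gt0 // pos' //; lia.
move/eqP: Pm1 => Pm1.
have -> : P + 3 = P + 2 + 1 by lia.
rewrite (@expand_E9 _ c c' w0 w1 w2 P (P + 2) 1 H).
have he1 : exists e0 : int, 1 <= e0 /\ P + 2 = P + 2 * e0 by exists 1; split => //; lia.
have [T1 [T2 [T3 [T4 [T5 [T6 [T7 [T8 T9]]]]]]]] := Ts_nonneg (d := 1) (inv_G I) (lexx _) he1.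
apply: (E9_gt0 (ltW h0) h1 h2 T1 T2 T3 T4 T5 T6 T7 T8 T9).
case: hk => [[hk [hw1 hw2]]|[hk [hw1 hw2]]].
  left; rewrite hw1 expr1n mul1r.
  by apply: (S_at (N := N) I); clear -hP1 hP2 Pm1 hk; lia.
have [P0|/eqP P0] := eqVneq P 0.
  right; right; rewrite hw2 mulr1 mulr_gt0 //.
  rewrite (neg (P - 2)); last by clear -P0; lia.
  by rewrite mul0r subr0 mulr_gt0 // pos //; clear -P0 hN; lia.
right; left; rewrite hw2 expr1n mul1r.
by apply: (S_at (N := N) I); clear -hP1 hP2 Pm1 hk P0; lia.
Qed.


Definition cz (R : nzRingType) (p : {poly R}) (i : int) : R :=
  match i with Posz n => p`_n | Negz _ => 0 end.

Lemma cz_neg (R : nzRingType) (p : {poly R}) (i : int) : i < 0 -> cz p i = 0.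
Proof. by case: i. Qed.

Lemma cz_mulq (R : comNzRingType) (h : {poly R}) (w0 w1 w2 : R) (i : int) :
  cz (h * (w2 *: 'X^2 + w1 *: 'X + w0%:P)) i
  = w0 * cz h i + w1 * cz h (i - 1) + w2 * cz h (i - 2).
Proof.
case: i => [n|n]; last first.
  by rewrite /= !mulr0 !addr0.
rewrite /= -!mul_polyC !mulrDr !coefD !mulrA !coefMX !coefMC.
case: n => [|[|n]] /=.
- by rewrite !mulr0 !add0r !addr0 mulrC.
- rewrite subnn mulr0 addr0 add0r; ring.
- have -> : (n.+2 - 1 = n.+1)%N by lia.
  have -> : (n.+2 - (0 + 1).+1 = n)%N by lia.
  ring.
Qed.



Lemma cz1 (R : nzRingType) (i : int) : cz (1 : {poly R}) i = if i == 0 then 1 else 0.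
Proof. by case: i => [[|n]|n] //=; rewrite coef1. Qed.

Lemma Inv1 (R : realFieldType) : Inv (cz (1 : {poly R})) 0.
Proof.
constructor => //.
- by move=> i hi; rewrite cz_neg.
- by move=> i; rewrite cz1; case: eqP.
- by move=> i h1 h2; rewrite cz1 ifT //; apply/eqP; lia.
- move=> P Q d hd [e [he HQ]]; rewrite /Gs !cz1.
  case: eqP => h1; case: eqP => h2; case: eqP => h3; case: eqP => h4;
   rewrite ?mul1r ?mul0r ?mulr1 ?mulr0 ?subr0 ?sub0r ?subrr ?oppr_ge0 ?ler01 //;
   exfalso; clear -h1 h2 h3 h4 hd he HQ; lia.
- by move=> P h1 h2; exfalso; lia.
Qed.


Definition MonoZ (R : realFieldType) (v : int -> R) := forall k : int, 0 <= k -> v k <= 0 ->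
  v (k + 2) < 0 \/ forall m : int, 0 <= m -> v (k + 2 * m + 2) = 0.

Lemma MonoZ_shift (R : realFieldType) (v w : int -> R) (s : R) :
  0 <= s -> (forall k, k < 0 -> v k = 0) -> MonoZ v ->
  (forall k, w k = v k + s * v (k - 2)) -> MonoZ w.
Proof.
move=> hs vneg Hv Hw k hk.
rewrite !Hw => wk.
have e1 : k + 2 - 2 = k by lia.
have [vk|vk] := lerP (v k) 0.
  case: (Hv k hk vk) => [h|h].
    left; rewrite e1.
    have : 0 <= s * - v k by rewrite mulr_ge0 // oppr_ge0.
    rewrite mulrN; lra.
  have h0 := h 0 (lexx _); rewrite mulr0 addr0 in h0.
  rewrite e1 h0 add0r.
  have [sv|sv] := ltrP (s * v k) 0; first by left.
  right => m hm.
  have ssv : s * v k = 0.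
    apply/eqP; rewrite eq_le sv andbT.
    have : 0 <= s * - v k by rewrite mulr_ge0 // oppr_ge0.
    rewrite mulrN; lra.
  have [m0|m0] := eqVneq m 0.
    by rewrite m0 mulr0 addr0 Hw e1 h0 ssv addr0.
  move/eqP: m0 => m0.
  rewrite Hw h //.
  have -> : k + 2 * m + 2 - 2 = k + 2 * (m - 1) + 2 by lia.
  by rewrite h ?mulr0 ?addr0 //; lia.
exfalso.
have svn : s * v (k - 2) < 0 by lra.
have vkm : v (k - 2) < 0.
  rewrite ltNge; apply/negP => H.
  by have := mulr_ge0 hs H; rewrite leNgt svn.
have hk2 : 0 <= k - 2.
  rewrite leNgt; apply/negP => H.
  by move: vkm; rewrite vneg // ltxx.
case: (Hv _ hk2 (ltW vkm)) => [h|h].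
  have e2 : k - 2 + 2 = k by lia.
  by move: h; rewrite e2 => h; lra.
have := h 0 (lexx _).
have -> : k - 2 + 2 * 0 + 2 = k by lia.
move=> h'; lra.
Qed.

Lemma pat_of_mono (R : realFieldType) (u : nat -> R) (t : nat) :
  (forall j, (1 <= j)%N -> u j <= 0 -> u j.+1 < 0 \/ forall m, u (j + m.+1)%N = 0) ->
  u t != 0 ->
  (forall j : nat, (1 <= j <= t)%N -> 0 < u j)
  \/ exists s : nat, [/\ (1 <= s <= t)%N,
       (forall j : nat, (1 <= j < s)%N -> 0 < u j),
       u s <= 0 &
       (forall j : nat, (s < j <= t)%N -> u j < 0)].
Proof.
move=> Hm ut.
have [allp|] := boolP [forall j : 'I_t.+1, (1 <= j)%N ==> (0 < u j)].
  left => j /andP [j1 jt].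
  by have := forallP allp (@Ordinal t.+1 j jt); rewrite /= j1.
rewrite negb_forall => /existsP ex.
have ex' : exists j : nat, (1 <= j <= t)%N && (u j <= 0).
  case: ex => [[j jt]] /=; rewrite negb_imply -leNgt => /andP [j1 uj].
  by exists j; rewrite j1 uj -ltnS jt.
right.
pose s := ex_minn ex'.
have [/andP [/andP [s1 st] us] smin] : (1 <= s <= t)%N && (u s <= 0) /\
   forall j, (1 <= j <= t)%N && (u j <= 0) -> (s <= j)%N.
  by rewrite /s; case: ex_minnP.
exists s; split => //.
- by rewrite s1.
- move=> j /andP [j1 js]; rewrite ltNge; apply/negP => uj.
  have := smin j; rewrite j1 uj /= => /(_ _) H.
  have : (s <= j)%N by apply: H; rewrite (ltnW (leq_trans js st)).
  by rewrite leqNgt js.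
have key : forall i, (s + i <= t)%N -> u (s + i)%N <= 0 /\ ((0 < i)%N -> u (s + i)%N < 0).
  elim=> [|i IH] hi; first by rewrite addn0.
  have hi' : (s + i <= t)%N by rewrite (leq_trans _ hi) // leq_add2l.
  have [h1 _] := IH hi'.
  case: (Hm (s + i)%N _ h1) => [|h|h].
  - by rewrite (leq_trans s1) // leq_addr.
  - by rewrite addnS; split => //; exact: ltW.
  exfalso; move/negP: ut; apply.
  have -> : t = ((s + i) + (t - (s + i) - 1).+1)%N by clear -hi; lia.
  by rewrite h.
move=> j /andP [sj jt].
have e : j = (s + (j - s))%N by clear -sj; lia.
have := key (j - s)%N; rewrite -e => /(_ jt) [_]; apply.
by rewrite subn_gt0.
Qed.


Lemma cz_big (R : nzRingType) (h : {poly R}) (i : int) :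
  (size h)%:Z <= i -> cz h i = 0.
Proof.
by case: i => //= n hn; rewrite nth_default.
Qed.

Definition dzn (R : nzRingType) (n : nat) (F : {poly R}) (k : int) := cz F (n%:Z - k).

Inductive KG (R : realFieldType) : {poly R} -> Prop :=
 | KG1 : KG 1
 | KGX K : KG K -> KG (K * 'X)
 | KGQ K (s : R) : KG K -> 0 < s -> KG (K * ('X^2 + s%:P)).

Lemma KG_mono (R : realFieldType) (K : {poly R}) : KG K ->
  forall (F : {poly R}) n, size F = n.+1 -> MonoZ (dzn n F) ->
  exists m, size (F * K) = m.+1 /\ MonoZ (dzn m (F * K)).
Proof.
elim => [|K' KK IH|K' s KK IH hs] F n hF HM.
- by exists n; rewrite mulr1.
- have [m [hm Hm]] := IH F n hF HM.
  have F0 : F * K' != 0 by rewrite -size_poly_gt0 hm.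
  exists m.+1; split; first by rewrite mulrA size_mulX // hm.
  apply: (MonoZ_shift (s := 0) (lexx _) _ Hm).
    move=> k hk; rewrite /dzn cz_big // hm; lia.
  move=> k; rewrite mul0r addr0 /dzn mulrA.
  have -> : (F * K' * 'X) = (F * K') * (0 *: 'X^2 + 1 *: 'X + 0%:P).
    by rewrite scale0r add0r scale1r polyC0 addr0.
  rewrite cz_mulq mul0r add0r mul1r mul0r addr0.
  by congr cz; lia.
- have [m [hm Hm]] := IH F n hF HM.
  have F0 : F * K' != 0 by rewrite -size_poly_gt0 hm.
  exists m.+2; split.
    by rewrite mulrA size_Mmonic ?monicXnaddC // size_XnaddC // hm addnS addn2.
  apply: (MonoZ_shift (s := s) (ltW hs) _ Hm).
    move=> k hk; rewrite /dzn cz_big // hm; lia.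
  move=> k; rewrite /dzn mulrA.
  have -> : (F * K' * ('X^2 + s%:P)) = (F * K') * (1 *: 'X^2 + 0 *: 'X + s%:P).
    by rewrite scale0r addr0 scale1r.
  rewrite cz_mulq mul0r addr0 mul1r addrC mulrC.
  have -> : m.+2%:Z - k - 2 = m%:Z - k by lia.
  by have -> : m.+2%:Z - k = m%:Z - (k - 2) by lia.
Qed.

Lemma base_mono (R : realFieldType) (H : {poly R}) (N : nat) (r : R) :
  size H = N.+1 -> Inv (cz H) N ->
  MonoZ (dzn N.+1 (H * ('X - r%:P))).
Proof.
move=> hs I k hk.
have hx : 'X - r%:P = 0 *: 'X^2 + 1 *: 'X + (- r)%:P.
  by rewrite scale0r add0r scale1r polyCN.
rewrite /dzn hx !cz_mulq !mul0r !addr0 !mul1r.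
have neg := inv_neg I; have ge0 := inv_ge0 I; have pos := inv_pos I.
have big : forall i : int, N%:Z < i -> cz H i = 0.
  by move=> i hi; rewrite cz_big // hs; lia.
have [kN|kN] := lerP N%:Z k.
  move=> _; right => m hm.
  by rewrite cz_mulq !neg ?mulr0 ?addr0 //; clear -kN hm; lia.
have cpos : 0 <  cz H (N.+1%:Z - k - 1).
  by apply: pos; clear -kN hk; lia.
have [r0|r0] := lerP r 0.
  have h1 : 0 <= - r * cz H (N.+1%:Z - k) by rewrite mulr_ge0 // oppr_ge0.
  move=> h2; exfalso; clear -cpos h1 h2; lra.
move=> hv.
have [k0|/eqP k0] := eqVneq k 0.
  exfalso; move: hv; rewrite k0 subr0 big; last by lia.
  rewrite mulr0 add0r => hv; move: cpos; rewrite k0 subr0 => cpos.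
  clear -hv cpos; lra.
have [kN1|/eqP kN1] := eqVneq k (N%:Z - 1).
  left; rewrite (neg (N.+1%:Z - (k + 2) - 1)); last first.
    by clear -kN1; lia.
  rewrite addr0.
  have -> : N.+1%:Z - (k + 2) = 0 by clear -kN1; lia.
  have h1 : 0 < cz H 0 by apply: pos; lia.
  clear -h1 r0; nra.
left.
have S := @S_at _ (cz H) N (N.+1%:Z - (k + 2) - 1) (N.+1%:Z - (k + 2))
  (N.+1%:Z - k - 1) (N.+1%:Z - k) I.
have S' : 0 < cz H (N.+1%:Z - (k + 2)) * cz H (N.+1%:Z - k - 1) -
   cz H (N.+1%:Z - (k + 2) - 1) * cz H (N.+1%:Z - k).
  by apply: S; clear -hk kN k0 kN1; lia.
have D : 0 < cz H (N.+1%:Z - k) by apply: pos; clear -hk kN k0; lia.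
have B : 0 <= cz H (N.+1%:Z - (k + 2)) by apply: ge0.
clear -S' D B hv r0; nra.
Qed.


Lemma Inv_eq (R : realFieldType) (c : int -> R) N N' : Inv c N -> N = N' -> Inv c N'.
Proof. by move=> ? <-. Qed.

Lemma decomp (R : realType) (h : {poly R}) : h \is monic ->
  (forall z : complex R, root (map_poly (real_complex R) h) z -> complex.Re z <= 0) ->
  exists H K, [/\ h = H * K, H \is monic, Inv (cz H) ((size H).-1)%:Z & KG K].
Proof.
have [n] := ubnP (size h); elim: n => // n IH in h *; move=> hsz hm hr.
have [s1|s1] := eqVneq (size h) 1%N.
  have h1 : h = 1.
    have /size_poly1P [c c0 hc] : size h == 1%N by apply/eqP.
    by move: hm; rewrite hc monicE lead_coefC => /eqP ->.
  exists 1, 1; split; rewrite ?mulr1 ?monic1 //; last exact: KG1.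
  by rewrite size_poly1; exact: Inv1.
have step : forall d : {poly R}, d \is monic -> (1 < size d)%N -> d %| h ->
    exists H1 K1, [/\ h = H1 * K1 * d, H1 \is monic, Inv (cz H1) ((size H1).-1)%:Z & KG K1].
  move=> d dm ds dd.
  have e : h = h %/ d * d by rewrite divpK.
  have h1m : h %/ d \is monic by rewrite -(monicMr _ dm) -e.
  have hs : size h = (size (h %/ d) + size d).-1.
    by rewrite {1}e size_Mmonic // monic_neq0.
  have [||H1 [K1 [e1 H1m I1 K1g]]] := IH (h %/ d) _ h1m.
  - by clear -hsz hs ds; move: hsz; rewrite hs; move: ds; set y := size (h %/ d); set w := size d; lia.
  - move=> z hz; apply: hr; rewrite e rmorphM rootM hz //.
  by exists H1, K1; rewrite -e1.
have [z hz] : exists z, root (map_poly (real_complex R) h) z.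
  by apply/closed_rootP; rewrite size_map_poly.
have hRe := hr z hz.
have [b0|b0] := eqVneq (complex.Im z) 0.
  set a := complex.Re z.
  have za : z = real_complex R a by case: z hz hRe b0 @a => x y /= _ _ ->.
  have ra : root h a.
    by move: hz; rewrite za /root horner_map fmorph_eq0.
  have [|||H1 [K1 [e1 H1m I1 K1g]]] := step ('X - a%:P).
  - exact: monicXsubC.
  - by rewrite size_XsubC.
  - by rewrite -root_factor_theorem.
  have [a0|a0] := eqVneq a 0.
    exists H1, (K1 * 'X); split => //; last exact: KGX.
    by rewrite e1 a0 subr0 mulrA.
  have an : a < 0 by rewrite lt_neqAle a0 hRe.
  exists (H1 * ('X - a%:P)), K1; split => //.
  - by rewrite e1 mulrAC.
  - by rewrite monicMr // monicXsubC.
  have hx : 'X - a%:P = 0 *: 'X^2 + 1 *: 'X + (- a)%:P.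
    by rewrite scale0r add0r scale1r polyCN.
  apply: (Inv_eq (N := ((size H1).-1)%:Z + 1)).
    apply: (@Inv_mul _ (cz H1) _ _ (- a) 1 0 1 I1) => //.
    - by rewrite oppr_gt0.
    - by move=> i; rewrite hx cz_mulq.
    - by left.
  rewrite size_Mmonic ?monic_neq0 ?monicXsubC // size_XsubC.
  have : (0 < size H1)%N by rewrite size_poly_gt0 monic_neq0.
  by case: (size H1) => // k _; rewrite addn2 /=; lia.
set a := complex.Re z; set b := complex.Im z.
set q : {poly R} := 'X^2 + (-2 * a) *: 'X + (a^+2 + b^+2)%:P.
have hq : map_poly (real_complex R) q = ('X - z%:P) * ('X - (z^*)%C%:P).
  have E1 : real_complex R (-2 * a) = - (z + z^*%C).
    rewrite /a; case: (z) => x y; apply/eqP; rewrite eq_complex /=.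
    by apply/andP; split; apply/eqP; ring.
  have E2 : real_complex R (a^+2 + b^+2) = z * z^*%C.
    rewrite /a /b; case: (z) => x y; apply/eqP; rewrite eq_complex /=.
    by apply/andP; split; apply/eqP; ring.
  rewrite /q rmorphD rmorphD /= map_polyXn map_polyZ map_polyX map_polyC /= E1 E2.
  rewrite -mul_polyC polyCN polyCD polyCM; ring.
have zc : z^*%C != z.
  rewrite /b in b0; case: (z) b0 => x y /= y0.
  rewrite eq_complex /= eqxx /=; apply/eqP => yy.
  by move/eqP: y0; apply; lra.
have rc : root (map_poly (real_complex R) h) (z^*)%C.
  rewrite -complex_root_conj -map_poly_comp.
  by rewrite (eq_map_poly (g := real_complex R)) // => x /=; apply/eqP; rewrite eq_complex /= oppr0 !eqxx.
have dq : q %| h.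
  rewrite -(dvdp_map (real_complex R)) hq.
  set hC := map_poly (real_complex R) h in hz rc *.
  have d1 : ('X - z%:P) %| hC by rewrite -root_factor_theorem.
  have e1 := divpK d1.
  have r1 : root (hC %/ ('X - z%:P)) (z^*)%C.
    move: rc; rewrite -{1}e1 rootM root_XsubC (negbTE zc) orbF //.
  have d2 : ('X - (z^*)%C%:P) %| (hC %/ ('X - z%:P)) by rewrite -root_factor_theorem.
  rewrite -e1 -(divpK d2) -mulrA [_ * ('X - z%:P)]mulrC.
  exact: dvdp_mulIr.
have qm : q \is monic.
  by rewrite -(map_monic (real_complex R)) hq monicMl ?monicXsubC.
have qs : size q = 3%N.
  by rewrite -(size_map_poly (real_complex R)) hq size_mul ?polyXsubC_eq0 // !size_XsubC.
have [||H1 [K1 [e1 H1m I1 K1g]]] := step q qm; [by rewrite qs | done | ].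
have b2 : 0 < b^+2.
  by rewrite lt0r sqrf_eq0 b0 sqr_ge0.
have [a0|a0] := eqVneq a 0.
  exists H1, (K1 * ('X^2 + (b^+2)%:P)); split => //; last exact: KGQ.
  by rewrite e1 -mulrA /q a0 mulr0 scale0r addr0 expr0n /= add0r.
have an : a < 0 by rewrite lt_neqAle a0 hRe.
exists (H1 * q), K1; split => //.
- by rewrite e1 mulrAC.
- by rewrite monicMr.
have hx : q = 1 *: 'X^2 + (-2 * a) *: 'X + (a^+2 + b^+2)%:P by rewrite scale1r.
apply: (Inv_eq (N := ((size H1).-1)%:Z + 2)).
  apply: (@Inv_mul _ (cz H1) _ _ (a^+2 + b^+2) (-2 * a) 1 2 I1).
  - by rewrite ltr_wpDl // sqr_ge0.
  - by clear -an; lra.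
  - done.
  - by move=> i; rewrite hx cz_mulq.
  - by right; split => //; split => //; nra.
rewrite size_Mmonic ?monic_neq0 // qs.
have : (0 < size H1)%N by rewrite size_poly_gt0 monic_neq0.
by case: (size H1) => // k _; rewrite addn3 /=; lia.
Qed.


Lemma coef_a_cz (R : realType) n (f : {poly R}) (k : nat) :
  coef_a n f k = cz f (n%:Z - k%:Z).
Proof.
rewrite /coef_a; case: leqP => hk.
  by have -> : n%:Z - k%:Z = (n - k)%N%:Z by lia.
by rewrite cz_neg //; lia.
Qed.

Unset Implicit Arguments.

Theorem theorem4p1 (R : realType) (n : nat) (f : {poly R})
  (r : R) (x : 'I_n.-1 -> complex R) :
  (1 <= n)%N ->
  f \is monic -> size f = n.+1 ->
  map_poly (real_complex R) f
    = ('X - (real_complex R r)%:P) * \prod_(j < n.-1) ('X - (x j)%:P) ->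
  (forall j, complex.Re (x j) <= 0) ->
  (* (i) even-indexed coefficients *)
  (forall t : nat,
     coef_a n f (2 * t) != 0 ->
     (forall m : nat, (t < m)%N -> coef_a n f (2 * m) = 0) ->
     (forall j : nat, (1 <= j <= t)%N -> 0 < coef_a n f (2 * j))
     \/ exists s : nat, [/\ (1 <= s <= t)%N,
          (forall j : nat, (1 <= j < s)%N -> 0 < coef_a n f (2 * j)),
          coef_a n f (2 * s) <= 0 &
          (forall j : nat, (s < j <= t)%N -> coef_a n f (2 * j) < 0)])
  /\
  (* (ii) odd-indexed coefficients *)
  (forall t' : nat, (1 <= t')%N ->
     coef_a n f (2 * t' - 1) != 0 ->
     (forall m : nat, (t' < m)%N -> coef_a n f (2 * m - 1) = 0) ->
     (forall j : nat, (1 <= j <= t')%N -> 0 < coef_a n f (2 * j - 1))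
     \/ exists s' : nat, [/\ (1 <= s' <= t')%N,
          (forall j : nat, (1 <= j < s')%N -> 0 < coef_a n f (2 * j - 1)),
          coef_a n f (2 * s' - 1) <= 0 &
          (forall j : nat, (s' < j <= t')%N -> coef_a n f (2 * j - 1) < 0)]).
Proof.
move=> hn fm fs hfac hre.
set D := 'X - r%:P.
have Dm : D \is monic by exact: monicXsubC.
have rootr : root f r.
  have : root (map_poly (real_complex R) f) (real_complex R r).
    by rewrite /root hfac hornerM hornerXsubC subrr mul0r.
  by rewrite /root horner_map fmorph_eq0.
have dD : D %| f by rewrite -root_factor_theorem.
set h := f %/ D.
have ef : f = h * D by rewrite divpK.
have hm : h \is monic by rewrite -(monicMr _ Dm) -ef.
have mapD : map_poly (real_complex R) D = 'X - (real_complex R r)%:P.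
  by rewrite /D rmorphB /= map_polyX map_polyC.
have mh : map_poly (real_complex R) h = \prod_(j < n.-1) ('X - (x j)%:P).
  apply: (@mulIf _ ('X - (real_complex R r)%:P)); first by rewrite polyXsubC_eq0.
  by rewrite -mapD -rmorphM -ef /= hfac mulrC mapD.
have hroots : forall z : complex R, root (map_poly (real_complex R) h) z -> complex.Re z <= 0.
  move=> z; rewrite mh /root horner_prod => /prodf_eq0 [j _].
  by rewrite hornerXsubC subr_eq0 => /eqP ->.
have [H [K [eh Hm IH KGK]]] := decomp hm hroots.
set N := (size H).-1.
have sH : size H = N.+1 by rewrite /N prednK // size_poly_gt0 monic_neq0.
have B := base_mono (r := r) sH IH.
have sF0 : size (H * D) = N.+2.
  by rewrite size_Mmonic ?monic_neq0 // sH size_XsubC addn2.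
have [m [sm Mm]] := KG_mono KGK sF0 B.
have ef2 : f = H * D * K by rewrite ef eh mulrAC.
have mn : m = n by apply/eqP; rewrite -eqSS -sm -ef2 fs.
rewrite -ef2 mn in Mm.
have cv : forall k : nat, coef_a n f k = dzn n f k%:Z by move=> k; rewrite coef_a_cz.
split.
  move=> t ht _; apply: (@pat_of_mono _ (fun j => coef_a n f (2 * j)) t) ht => j j1 hj /=.
  rewrite cv in hj.
  case: (Mm (2 * j)%N%:Z _ hj) => [|h1|h1]; first by lia.
    by left; rewrite cv; have -> : (2 * j.+1)%N%:Z = (2 * j)%N%:Z + 2 by lia.
  right => k; rewrite cv.
  have -> : (2 * (j + k.+1))%N%:Z = (2 * j)%N%:Z + 2 * k%:Z + 2 by lia.
  by apply: h1; lia.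
move=> t _ ht _; apply: (@pat_of_mono _ (fun j => coef_a n f (2 * j - 1)) t) ht => j j1 hj /=.
rewrite cv in hj.
case: (Mm (2 * j - 1)%N%:Z _ hj) => [|h1|h1]; first by lia.
  by left; rewrite cv; have -> : (2 * j.+1 - 1)%N%:Z = (2 * j - 1)%N%:Z + 2 by lia.
right => k; rewrite cv.
have -> : (2 * (j + k.+1) - 1)%N%:Z = (2 * j - 1)%N%:Z + 2 * k%:Z + 2 by lia.
by apply: h1; lia.
Qed.
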